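(* Let $\zeta_5=\exp(2\pi i/5)$, $K=\mathbb{Q}(\zeta_5)\subset\mathbb{C}$, $\mathcal{O}_K=\mathbb{Z}[\zeta_5]$, let $\sigma:K\to\mathbb{C}$ be the embedding with $\sigma(\zeta_5)=\zeta_5^2$, and let $\mathcal{S}=\{z\in\mathcal{O}_K : |\sigma(z)|\le 1\}$. Then for every $z\in\mathcal{S}$, $$\min_{z'\in\mathcal{S}\setminus\{z\}}|z-z'|\le 1.$$
   Context: Elements of $K$ are regarded as complex numbers via the inclusion $K\subset\mathbb{C}$. *)

(* Defs.v *)
From HB Require Import structures.
From mathcomp Require Import all_boot all_order all_algebra.
From mathcomp Require Import complex.
From mathcomp Require Import all_classical all_reals all_analysis.
Set Implicit Arguments. Unset Strict Implicit. Unset Printing Implicit Defensive.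
Import Order.TTheory GRing.Theory Num.Theory.
Local Open Scope ring_scope.
Local Open Scope complex_scope.

Definition zeta5 (R : realType) : R[i] :=
  (cos (2 * pi / 5)) +i* (sin (2 * pi / 5)).

Definition OKelt (R : realType) (a : 'I_4 -> int) : R[i] :=
  \sum_(k < 4) (a k)%:~R * zeta5 R ^+ k.

Definition sigmaOK (R : realType) (a : 'I_4 -> int) : R[i] :=
  \sum_(k < 4) (a k)%:~R * (zeta5 R ^+ 2) ^+ k.

Definition inS (R : realType) (z : R[i]) : Prop :=
  exists a : 'I_4 -> int, z = OKelt R a /\ `|sigmaOK R a| <= 1.

(* Main.v *)
Require Import Defs.
From HB Require Import structures.
From mathcomp Require Import all_boot all_order all_algebra.
From mathcomp Require Import complex.
From mathcomp Require Import all_classical all_reals all_analysis.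
From mathcomp Require Import ring lra.
Import Order.TTheory GRing.Theory Num.Theory.
Local Open Scope ring_scope.
Local Open Scope complex_scope.

Lemma real_key (R : realType) (x y : R) (a b : nat -> R) :
  (forall k, a k ^+ 2 + b k ^+ 2 = 1) ->
  \sum_(k < 5) (a k ^+ 2 - b k ^+ 2) = 0 ->
  \sum_(k < 5) (a k * b k) = 0 ->
  x ^+ 2 + y ^+ 2 <= 1 ->
  exists k, (k < 5)%N /\ exists e : R, (e = 1 \/ e = -1) /\
     (x + e * a k) ^+ 2 + (y + e * b k) ^+ 2 <= 1.
Proof.
move=> hab.
rewrite !big_ord_recr !big_ord0 /= !add0r => h1 h2 hr.
case: (pselect (exists k, (k < 5)%N /\ exists e : R, (e = 1 \/ e = -1) /\
     (x + e * a k) ^+ 2 + (y + e * b k) ^+ 2 <= 1)) => // nok.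
exfalso.
set r := x ^+ 2 + y ^+ 2.
have key : forall k, (k < 5)%N ->
   r ^+ 2 - 4 * (x * a k + y * b k) ^+ 2 > 0.
  move=> k hk.
  have Hp : 1 < (x + a k) ^+ 2 + (y + b k) ^+ 2.
    rewrite ltNge; apply/negP => H; apply: nok; exists k; split => //.
    by exists 1; split; [left|rewrite !mul1r].
  have Hm : 1 < (x - a k) ^+ 2 + (y - b k) ^+ 2.
    rewrite ltNge; apply/negP => H; apply: nok; exists k; split => //.
    by exists (-1); split; [right|rewrite !mulN1r].
  have hk' := hab k.
  have P1 : 0 < r + 2 * (x * a k + y * b k) by rewrite /r; nra.
  have P2 : 0 < r - 2 * (x * a k + y * b k) by rewrite /r; nra.
  have := mulr_gt0 P1 P2. nra.
have k0 := key 0%N isT; have k1 := key 1%N isT; have k2 := key 2%N isT;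
have k3 := key 3%N isT; have k4 := key 4%N isT.
have h0 := hab 0%N; have h1' := hab 1%N; have h2' := hab 2%N;
have h3 := hab 3%N; have h4 := hab 4%N.
have E : 2 * \sum_(k < 5) (x * a k + y * b k) ^+ 2 =
   r * \sum_(k < 5) (a k ^+ 2 + b k ^+ 2)
   + (x ^+ 2 - y ^+ 2) * \sum_(k < 5) (a k ^+ 2 - b k ^+ 2)
   + 4 * x * y * \sum_(k < 5) (a k * b k).
  rewrite !big_ord_recr !big_ord0 /= !add0r /r.
 ring.
move: E; rewrite !big_ord_recr !big_ord0 /= !add0r h1 h2 h0 h1' h2' h3 h4 => E.
have r0 : 0 <= r by rewrite /r; nra.
have hr1 : r <= 1 by [].
have m : 0 <= r * (1 - r) by apply: mulr_ge0; lra.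
have m' : r * (1 - r) = r - r ^+ 2 by ring.
lra.
Qed.
Lemma shift (R : realType) (a : 'I_4 -> int) (k : nat) (e : int) : (k < 5)%N ->
  exists b : 'I_4 -> int, forall x : R[i], 1 + x + x ^+ 2 + x ^+ 3 + x ^+ 4 = 0 ->
  \sum_(i < 4) (b i)%:~R * x ^+ i = \sum_(i < 4) (a i)%:~R * x ^+ i + e%:~R * x ^+ k.
Proof.
move=> hk.
have [k4|] := ltnP k 4.
  exists (fun i => a i + (if (i : nat) == k then e else 0)) => x _.
  rewrite !big_ord_recr !big_ord0 /= !add0r !intrD.
  by case: k k4 {hk} => [|[|[|[|]]]] //= _; rewrite ?mulr0 ?mul0r; ring.
move=> h4; have -> : k = 4%N by apply/anti_leq; rewrite h4 andbT -ltnS.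
exists (fun i => a i - e) => x hx.
rewrite !big_ord_recr !big_ord0 /= !add0r !intrB.
have -> : x ^+ 4 = - (1 + x + x ^+ 2 + x ^+ 3) by apply/eqP; rewrite -subr_eq0 -hx; apply/eqP; ring.
ring.
Qed.
Lemma zeta_pow (R : realType) (n : nat) :
  zeta5 R ^+ n = cos (n%:R * (2 * pi / 5)) +i* sin (n%:R * (2 * pi / 5)).
Proof.
elim: n => [|n IH]; first by rewrite expr0 !mul0r cos0 sin0.
rewrite exprS IH /zeta5; set t := (2 * pi / 5 : R).
rewrite -natr1 mulrDl mul1r cosD sinD.
apply/eqP; rewrite eq_complex /=; apply/andP; split; apply/eqP; ring.
Qed.

Lemma zeta5_5 (R : realType) : zeta5 R ^+ 5 = 1.
Proof.
rewrite zeta_pow.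
have -> : (5%:R * (2 * pi / 5) : R) = pi *+ 2.
  rewrite mulr2n; lra.
by rewrite cos2pi sin2pi.
Qed.

Lemma zeta5_neq1 (R : realType) : zeta5 R != 1.
Proof.
apply/negP => /eqP/(congr1 (fun z : R[i] => complex.Im z)) /=.
have : 0 < sin (2 * pi / 5 : R).
  apply: sin_gt0_pi; have hp := pi_gt0 R; apply/andP; split; lra.
by move=> h e; move: h; rewrite e ltxx.
Qed.

Lemma zeta5_sum (R : realType) : 1 + zeta5 R + zeta5 R ^+ 2 + zeta5 R ^+ 3 + zeta5 R ^+ 4 = 0.
Proof.
have : (zeta5 R - 1) * (1 + zeta5 R + zeta5 R ^+ 2 + zeta5 R ^+ 3 + zeta5 R ^+ 4) = 0.
  by rewrite -(subrr 1) -{3}(zeta5_5 R); ring.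
by move/eqP; rewrite mulf_eq0 subr_eq0 (negbTE (zeta5_neq1 R)) /= => /eqP.
Qed.

Lemma zeta5_norm (R : realType) : `|zeta5 R| = 1.
Proof.
by rewrite normc_def /= cos2Dsin2 sqrtr1.
Qed.

Lemma ReD (R : realType) (x y : R[i]) : complex.Re (x + y) = complex.Re x + complex.Re y.
Proof. by case: x; case: y. Qed.
Lemma ImD (R : realType) (x y : R[i]) : complex.Im (x + y) = complex.Im x + complex.Im y.
Proof. by case: x; case: y. Qed.
Lemma ReMC (R : realType) (c : R) (w : R[i]) : complex.Re (c%:C * w) = c * complex.Re w.
Proof. by case: w => p q /=; ring. Qed.
Lemma ImMC (R : realType) (c : R) (w : R[i]) : complex.Im (c%:C * w) = c * complex.Im w.
Proof. by case: w => p q /=; ring. Qed.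
Lemma ReIm2 (R : realType) (w : R[i]) :
  complex.Re (w ^+ 2) = complex.Re w ^+ 2 - complex.Im w ^+ 2 /\
  complex.Im (w ^+ 2) = 2 * (complex.Re w * complex.Im w).
Proof. by case: w => p q; rewrite !expr2 /=; split; ring. Qed.

Lemma norm_le1 (R : realType) (v : R[i]) :
  (`|v| <= 1) = (complex.Re v ^+ 2 + complex.Im v ^+ 2 <= 1).
Proof.
rewrite -(@expr_le1 _ 2%N) // -add_Re2_Im2.
by rewrite -[1 : R[i]]/(1%:C) lecR.
Qed.

Lemma sq_sum (R : realType) (x : R[i]) : x ^+ 5 = 1 ->
  1 + x + x ^+ 2 + x ^+ 3 + x ^+ 4 = 0 ->
  1 + x ^+ 2 + (x ^+ 2) ^+ 2 + (x ^+ 2) ^+ 3 + (x ^+ 2) ^+ 4 = 0.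
Proof.
move=> h5 hs.
have e n : x ^+ (5 + n) = x ^+ n by rewrite exprD h5 mul1r.
have -> : 1 + x ^+ 2 + (x ^+ 2) ^+ 2 + (x ^+ 2) ^+ 3 + (x ^+ 2) ^+ 4
  = 1 + x ^+ 2 + x ^+ 4 + x ^+ (5 + 1) + x ^+ (5 + 3) by ring.
rewrite !e -{}hs; ring.
Qed.


Lemma sums_of (R : realType) (w : nat -> R[i]) : \sum_(k < 5) w k ^+ 2 = 0 ->
  \sum_(k < 5) (complex.Re (w k) ^+ 2 - complex.Im (w k) ^+ 2) = 0 /\
  \sum_(k < 5) (complex.Re (w k) * complex.Im (w k)) = 0.
Proof.
move=> W.
have WR : complex.Re (\sum_(k < 5) w k ^+ 2) = 0 by rewrite W.
have WI : complex.Im (\sum_(k < 5) w k ^+ 2) = 0 by rewrite W.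
move: WR WI; rewrite !big_ord_recr !big_ord0 /= !ReD !ImD.
rewrite !(fun v => proj1 (@ReIm2 R v)) !(fun v => proj2 (@ReIm2 R v)).
have -> : complex.Im (0 : R[i]) = 0 by [].
have -> : complex.Re (0 : R[i]) = 0 by [].
move=> WR WI; split; lra.
Qed.

Local Close Scope complex_scope.

Theorem mainTheorem4 (R : realType) (z : R[i]) :
  inS z -> exists z' : R[i], [/\ inS z', z' != z & `|z - z'| <= 1].
Proof.
move=> [a [-> ha]].
set s := sigmaOK R a.
set w := fun k : nat => (zeta5 R ^+ 2) ^+ k.
have z5 := zeta5_5 R; have zs := zeta5_sum R.
have z5' : (zeta5 R ^+ 2) ^+ 5 = 1 by rewrite -exprM mulnC exprM z5 expr1n.
have zs' := @sq_sum R _ z5 zs.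
have zs2 := @sq_sum R _ z5' zs'.
have h1 : forall k, complex.Re (w k) ^+ 2 + complex.Im (w k) ^+ 2 = 1.
  move=> k; apply: complexI; rewrite add_Re2_Im2 /w !normrX zeta5_norm !expr1n.
  by [].
have W : \sum_(k < 5) w k ^+ 2 = 0.
  by rewrite !big_ord_recr !big_ord0 /= -[RHS]zs2 /w; ring.
have [h2 h3] := @sums_of R w W.
have h4 : complex.Re s ^+ 2 + complex.Im s ^+ 2 <= 1 by rewrite -norm_le1.
have [k [hk [e [he H]]]] := @real_key R _ _ _ _ h1 h2 h3 h4.
have [ei [eiR eiv]] : exists ei : int, e = ei%:~R /\ (ei = 1 \/ ei = -1).
  by case: he => ->; [exists 1 | exists (-1)]; split => //; [left|right].
have [b hb] := @shift R a k ei hk.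
have hC : (ei%:~R : R[i]) = ((ei%:~R : R)%:C)%C by rewrite rmorph_int.
have z0 : zeta5 R != 0 by rewrite -normr_eq0 zeta5_norm oner_eq0.
have ei0 : (ei%:~R : R[i]) != 0 by case: eiv => ->.
exists (OKelt R a + ei%:~R * zeta5 R ^+ k); split.
- exists b; split; first by rewrite /OKelt hb.
  rewrite /sigmaOK hb // -/(sigmaOK R a) -/s norm_le1 ReD ImD hC ReMC ImMC -eiR.
  exact: H.
- by rewrite -subr_eq0 [OKelt R a + _]addrC addrK mulf_neq0 // expf_neq0.
- rewrite opprD addrA subrr add0r normrN normrM normrX zeta5_norm expr1n mulr1.
  by case: eiv => ->; rewrite ?normrN normr1.
Qed.
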